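(* For all integers $0<k \leq \ell < n$, the polynomial \[ \overline{ { n \brack k}}_{q,t} \overline{ { n \brack \ell }}_{q,t} - \overline{ { n \brack k-1}}_{q,t} \overline{ { n \brack \ell +1}}_{q,t} \] has non-negative coefficients as a polynomial in $t$ and $q$.
   Context: An overpartition is a partition in which the last occurrence of each distinct part size may be overlined; its weight $|\lambda|$ is the sum of its parts. For integers $0\le b\le a$, $\overline{{a \brack b}}_{q,t}=\sum_{\lambda} t^{\#_o(\lambda)} q^{|\lambda|}$, the sum over all overpartitions $\lambda$ with largest part at most $a-b$ and at most $b$ parts, where $\#_o(\lambda)$ is the number of overlined parts of $\lambda$. *)

(* Defs.v *)
From mathcomp Require Import all_boot all_order all_algebra.
Set Implicit Arguments. Unset Strict Implicit. Unset Printing Implicit Defensive.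
Import GRing.Theory Num.Theory.
Local Open Scope ring_scope.

(* An overpartition with at most b parts, each at most m, is encoded as a pair
   (x, o) where
   - x : b.-tuple 'I_m.+1 is the list of parts padded by zeros, in
     non-increasing order (so the nonzero entries form a partition with at
     most b parts and largest part at most m);
   - o : {set 'I_m.+1} is the set of part sizes whose (last) occurrence is
     overlined; it must be a subset of the distinct nonzero parts. *)
Definition is_overpart (m b : nat) (x : (b.-tuple 'I_m.+1) * {set 'I_m.+1}) : bool :=
  sorted geq (map (@nat_of_ord _) x.1) &&
  (x.2 \subset [set i : 'I_m.+1 | (i != ord0) && (i \in (x.1 : seq _))]).

Definition ovp_weight (m b : nat) (x : (b.-tuple 'I_m.+1) * {set 'I_m.+1}) : nat :=
  sumn (map (@nat_of_ord _) x.1).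

Definition ovp_nover (m b : nat) (x : (b.-tuple 'I_m.+1) * {set 'I_m.+1}) : nat :=
  #|x.2|.

(* The overpartition analogue of the Gaussian binomial, as a polynomial in t
   (outer variable) whose coefficients are polynomials in q (inner variable):
   sum over overpartitions lambda with largest part <= a - b and at most b parts
   of t^{#overlined parts} q^{|lambda|}. *)
Definition ovgauss (a b : nat) : {poly {poly int}} :=
  \sum_(x : (b.-tuple 'I_(a - b).+1) * {set 'I_(a - b).+1} | is_overpart x)
     (('X^(ovp_weight x))%:P * 'X^(ovp_nover x)).

(* Main.v *)
Require Import Defs.
From mathcomp Require Import all_boot all_order all_algebra.
From mathcomp Require Import ring zify.
Import GRing.Theory Num.Theory.
Local Open Scope ring_scope.

Module Aux.
Set Implicit Arguments. Unset Strict Implicit. Unset Printing Implicit Defensive.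
Section PS.
Variable R : nzRingType.
Variable S : R -> Prop.
Hypothesis S0 : S 0.
Hypothesis S1 : S 1.
Hypothesis SD : forall x y, S x -> S y -> S (x + y).
Hypothesis SM : forall x y, S x -> S y -> S (x * y).

Definition PS (p : {poly R}) := forall i, S p`_i.

Lemma S_sum (I : Type) (r : seq I) (Pr : pred I) (F : I -> R) :
  (forall i, Pr i -> S (F i)) -> S (\sum_(i <- r | Pr i) F i).
Proof. by move=> H; apply: big_ind => //; exact: SD. Qed.

Lemma PS0 : PS 0. Proof. by move=> i; rewrite coef0. Qed.
Lemma PSD p q : PS p -> PS q -> PS (p + q).
Proof. by move=> Hp Hq i; rewrite coefD; apply: SD. Qed.
Lemma PSM p q : PS p -> PS q -> PS (p * q).
Proof. by move=> Hp Hq i; rewrite coefM; apply: S_sum => j _; apply: SM. Qed.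
Lemma PSC c : S c -> PS c%:P.
Proof. by move=> Hc i; rewrite coefC; case: eqP. Qed.
Lemma PS1 : PS 1. Proof. exact: PSC. Qed.
Lemma PSX : PS 'X.
Proof. by move=> i; rewrite coefX; case: eqP. Qed.
Lemma PSXn p n : PS p -> PS (p ^+ n).
Proof. move=> Hp; elim: n => [|n IH]; first by rewrite expr0; exact: PS1.
by rewrite exprS; apply: PSM. Qed.
End PS.

Definition nn1 (p : {poly int}) := PS (fun x : int => 0 <= x) p.
Definition nn (p : {poly {poly int}}) := PS nn1 p.

Lemma nn1_0 : nn1 0. Proof. exact: PS0. Qed.
Lemma nn1_1 : nn1 1. Proof. exact: PS1. Qed.
Lemma nn1D p q : nn1 p -> nn1 q -> nn1 (p + q).
Proof. apply: PSD => x y; exact: addr_ge0. Qed.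
Lemma nn1M p q : nn1 p -> nn1 q -> nn1 (p * q).
Proof. apply: PSM => [|x y|x y]; [exact: Order.POrderTheory.lexx| exact: addr_ge0| exact: mulr_ge0]. Qed.
Lemma nn1X : nn1 'X. Proof. exact: PSX. Qed.

Lemma nn0 : nn 0. Proof. exact: (@PS0 _ nn1 nn1_0). Qed.
Lemma nn1' : nn 1. Proof. exact: (@PS1 _ nn1 nn1_0 nn1_1). Qed.
Lemma nnD p q : nn p -> nn q -> nn (p + q).
Proof. exact: (@PSD _ nn1 nn1D). Qed.
Lemma nnM p q : nn p -> nn q -> nn (p * q).
Proof. exact: (@PSM _ nn1 nn1_0 nn1D nn1M). Qed.
Lemma nnX : nn 'X. Proof. exact: (@PSX _ nn1 nn1_0 nn1_1). Qed.
Lemma nnC c : nn1 c -> nn c%:P. Proof. exact: (@PSC _ nn1 nn1_0). Qed.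
Lemma nnXn p n : nn p -> nn (p ^+ n).
Proof. exact: (@PSXn _ nn1 nn1_0 nn1_1 nn1D nn1M). Qed.

Local Notation PP := {poly {poly int}}.
Definition qv : PP := ('X)%:P.
Definition tv : PP := 'X.
Lemma nnq : nn qv. Proof. exact/nnC/nn1X. Qed.
Lemma nnt : nn tv. Proof. exact: nnX. Qed.
Lemma nnqn n : nn (qv ^+ n). Proof. exact/nnXn/nnq. Qed.

Fixpoint W (m b : nat) {struct m} : PP :=
  match m with
  | 0 => 1
  | m'.+1 =>
    let fix Wb b := match b with
      | 0 => 1
      | b'.+1 => qv ^+ b'.+1 * W m' b'.+1 + Wb b' + tv * qv ^+ b'.+1 * W m' b'
      end in Wb b
  end.

Lemma W0b b : W 0 b = 1. Proof. by []. Qed.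
Lemma Wm0 m : W m 0 = 1. Proof. by case: m. Qed.
Lemma WL m b : W m.+1 b.+1 = qv ^+ b.+1 * W m b.+1 + W m.+1 b + tv * qv ^+ b.+1 * W m b.
Proof. by []. Qed.
Global Opaque W.

Lemma nnW m b : nn (W m b).
Proof.
elim: m b => [|m IHm] b; first by rewrite W0b; exact: nn1'.
elim: b => [|b IHb]; first by rewrite Wm0; exact: nn1'.
rewrite WL; apply: nnD; [apply: nnD|] => //.
- by apply: nnM; [exact: nnqn| exact: IHm].
- by apply: nnM; [apply: nnM; [exact: nnt|exact: nnqn]| exact: IHm].
Qed.

Lemma W1 b : W 1 b.+1 = 1 + qv * W 1 b + tv * qv.
Proof.
elim: b => [|b IH].
  rewrite WL !W0b !Wm0 !expr1; ring.
rewrite (WL 0 b.+1) {1}IH (WL 0 b) !W0b !exprS; ring.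
Qed.

Lemma Wm1 m : W m.+1 1 = W m 1 + qv ^+ m.+1 + tv * qv ^+ m.+1.
Proof.
elim: m => [|m IH].
  rewrite WL !W0b !Wm0 !expr1; ring.
rewrite (WL m.+1 0) {1}IH (WL m 0) !Wm0 !exprS; ring.
Qed.

Definition DW m b := W m.+1 b.+1 - (W m b.+1 + qv ^+ m.+1 * W m.+1 b + tv * qv ^+ m.+1 * W m b).

Lemma DW_rec m b : DW m.+1 b.+1 = qv ^+ b.+2 * DW m b.+1 + DW m.+1 b + tv * qv ^+ b.+2 * DW m b.
Proof.
rewrite /DW.
rewrite (WL m.+1 b.+1) (WL m b.+1) (WL m.+1 b) (WL m b).
rewrite !exprS; ring.
Qed.

Lemma DW0 m b : DW m b = 0.
Proof.
elim: m b => [|m IHm] b.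
  rewrite /DW W1 !W0b expr1; ring.
elim: b => [|b IHb].
  rewrite /DW Wm1 !Wm0; ring.
by rewrite DW_rec IHm IHb IHm !mulr0 !addr0.
Qed.

Lemma WF m b : W m.+1 b.+1 = W m b.+1 + qv ^+ m.+1 * W m.+1 b + tv * qv ^+ m.+1 * W m b.
Proof. by apply/eqP; rewrite -subr_eq0; apply/eqP; exact: DW0. Qed.
Definition V (M B : nat) := match M, B with
  | M'.+1, B'.+1 => W M' B'
  | _, _ => 0 end.

Lemma V0b B : V 0 B = 0. Proof. by []. Qed.
Lemma Vm0 M : V M 0 = 0. Proof. by case: M. Qed.
Lemma VS M B : V M.+1 B.+1 = W M B. Proof. by []. Qed.
Global Opaque V.

Lemma nnV M B : nn (V M B).
Proof. case: M => [|M]; first by rewrite V0b; exact: nn0.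
case: B => [|B]; first by rewrite Vm0; exact: nn0. by rewrite VS; exact: nnW. Qed.

Lemma VF m c : (0 < m + c)%N ->
  V m.+1 c.+1 = V m c.+1 + qv ^+ m * V m.+1 c + tv * qv ^+ m * V m c.
Proof.
case: m => [|m]; case: c => [|c] // _.
- by rewrite !VS !V0b W0b !expr0 !mulr0 !addr0 add0r mul1r.
- by rewrite !VS !Vm0 !Wm0 !mulr0 !addr0.
- by rewrite !VS WF.
Qed.

Lemma VL m c : (0 < m + c)%N ->
  V m.+1 c.+1 = qv ^+ c * V m c.+1 + V m.+1 c + tv * qv ^+ c * V m c.
Proof.
case: m => [|m]; case: c => [|c] // _.
- by rewrite !VS !V0b !W0b !mulr0 !addr0 add0r.
- by rewrite !VS !Vm0 !Wm0 !mulr0 !addr0 expr0 mul1r.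
all: by rewrite !VS WL.
Qed.

Definition X M1 B1 M2 B2 r :=
  V M1 B1 * V M2 B2 - qv ^+ r * V M1.-1 B1.+1 * V M2.+1 B2.-1.

Lemma nnX3 a b c k : nn a -> nn b -> nn c -> nn (a + qv ^+ k * b + tv * qv ^+ k * c).
Proof.
move=> ha hb hc; apply: nnD; [apply: nnD|] => //; apply: nnM => //.
  exact: nnqn. by apply: nnM; [exact: nnt|exact: nnqn].
Qed.
Lemma nnX3' a b c k : nn a -> nn b -> nn c -> nn (qv ^+ k * a + b + tv * qv ^+ k * c).
Proof.
move=> ha hb hc; apply: nnD; [apply: nnD|] => //.
  by apply: nnM => //; exact: nnqn.
by apply: nnM => //; apply: nnM; [exact: nnt|exact: nnqn].
Qed.

Lemma key N : forall M1 B1 M2 B2 r, (M1 + B1 + M2 + B2 <= N)%N ->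
  (M1 <= M2.+1)%N -> (B2 <= B1.+1)%N -> (r <= (M2.+1 - M1) + (B1.+1 - B2))%N ->
  nn (X M1 B1 M2 B2 r).
Proof.
elim: N => [|N IH] M1 B1 M2 B2 r hN h1 h2 hr.
  have -> : M1 = 0%N by lia.
  have -> : X 0 B1 M2 B2 r = 0 by rewrite /X /= V0b; ring.
  exact: nn0.
have triv : (M1 <= 1)%N || (B2 <= 1)%N -> nn (X M1 B1 M2 B2 r).
  move=> /orP [] h; rewrite /X.
    have -> : M1.-1 = 0%N by lia.
    have -> : V 0 B1.+1 = 0 by rewrite V0b.
    rewrite mulr0 mul0r subr0; apply: nnM; exact: nnV.
  have -> : B2.-1 = 0%N by lia.
  rewrite Vm0 mulr0 subr0; apply: nnM; exact: nnV.
case: (boolP ((M1 <= 1)%N || (B2 <= 1)%N)) => [/triv //|hnt].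
have [x ex] : exists x, M1 = x.+2 by exists M1.-2; lia.
have [y ey] : exists y, B2 = y.+2 by exists B2.-2; lia.
subst M1 B2.
case: (ltnP (x.+1) M2) => ha.
-
  have [u eu] : exists u, M2 = u.+2 by exists M2.-2; lia.
  subst M2.
  case: (ltnP r ((u.+3 - x.+2) + (B1.+1 - y.+2))) => hr'.
  + have -> : X x.+2 B1 u.+2 y.+2 r =
      X x.+2 B1 u.+1 y.+2 r + qv ^+ u.+1 * X x.+2 B1 u.+2 y.+1 r.+1
      + tv * qv ^+ u.+1 * X x.+2 B1 u.+1 y.+1 r.+1.
      rewrite /X /= (@VF (u.+1) (y.+1) ltac:(lia)) (@VF (u.+2) y ltac:(lia)).
      rewrite !exprS; ring.
    apply: nnX3; apply: IH; lia.
  + have [r' er] : exists r', r = r'.+1 by exists r.-1; lia.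
    subst r.
    have -> : X x.+2 B1 u.+2 y.+2 r'.+1 =
      qv ^+ y.+1 * X x.+2 B1 u.+1 y.+2 r' + X x.+2 B1 u.+2 y.+1 r'.+1
      + tv * qv ^+ y.+1 * X x.+2 B1 u.+1 y.+1 r'.
      rewrite /X /= (@VL (u.+1) (y.+1) ltac:(lia)) (@VL (u.+2) y ltac:(lia)).
      rewrite !exprS; ring.
    apply: nnX3'; apply: IH; lia.
- have eM2 : M2 = x.+1 by lia.
  subst M2.
  case: (ltnP (y.+1) B1) => hb.
  + have [z ez] : exists z, B1 = z.+2 by exists B1.-2; lia.
    subst B1.
    case: (ltnP r ((x.+2 - x.+2) + (z.+3 - y.+2))) => hr'.
    * have -> : X x.+2 z.+2 x.+1 y.+2 r =
        qv ^+ z.+1 * X x.+1 z.+2 x.+1 y.+2 r.+1 + X x.+2 z.+1 x.+1 y.+2 r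
        + tv * qv ^+ z.+1 * X x.+1 z.+1 x.+1 y.+2 r.+1.
        rewrite /X /= (@VL (x.+1) (z.+1) ltac:(lia)) (@VL x (z.+2) ltac:(lia)).
        rewrite !exprS; ring.
      apply: nnX3'; apply: IH; lia.
    * have [r' er] : exists r', r = r'.+1 by exists r.-1; lia.
      subst r.
      have -> : X x.+2 z.+2 x.+1 y.+2 r'.+1 =
        X x.+1 z.+2 x.+1 y.+2 r'.+1 + qv ^+ x.+1 * X x.+2 z.+1 x.+1 y.+2 r'
        + tv * qv ^+ x.+1 * X x.+1 z.+1 x.+1 y.+2 r'.
        rewrite /X /= (@VF (x.+1) (z.+1) ltac:(lia)) (@VF x (z.+2) ltac:(lia)).
        rewrite !exprS; ring.
      apply: nnX3; apply: IH; lia.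
  + have eB1 : B1 = y.+1 by lia.
    have er : r = 0%N by lia.
    subst B1 r.
    rewrite /X /= expr0 mul1r.
    have -> : V x.+2 y.+1 * V x.+1 y.+2 - V x.+1 y.+2 * V x.+2 y.+1 = 0 by ring.
    exact: nn0.
Qed.

Lemma sum_subset_pow (T : finType) (D : {set T}) (x : PP) :
  \sum_(o : {set T} | o \subset D) x ^+ #|o| = (1 + x) ^+ #|D|.
Proof.
have e1 : (1 + x) ^+ #|D| = \prod_(i : T) ((if i \in D then x else 0) + 1).
  rewrite -prodr_const big_mkcond /=; apply: eq_bigr => i _.
  by case: (i \in D); rewrite ?add0r // addrC.
rewrite e1 bigA_distr /= [LHS]big_mkcond /=; apply: eq_big => [//|J _].
rewrite -big_mkcond /=.
case: (boolP (J \subset D)) => hJ.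
  rewrite -prodr_const; apply: eq_bigr => i iJ.
  by rewrite (subsetP hJ i iJ).
have /subsetPn [i iJ iD] := hJ.
by rewrite (bigD1 i) //= (negbTE iD) mul0r.
Qed.

Fixpoint SL (b m : nat) : seq (seq nat) :=
  if b is b'.+1 then flatten [seq [seq x :: s | s <- SL b' x] | x <- iota 0 m.+1]
  else [:: [::]].

Lemma SLS b m : SL b.+1 m = flatten [seq [seq x :: s | s <- SL b x] | x <- iota 0 m.+1].
Proof. by []. Qed.
Lemma SL0 m : SL 0 m = [:: [::]]. Proof. by []. Qed.

Lemma geq_trans' : transitive geq.
Proof. move=> x y z /= h1 h2; exact: leq_trans h2 h1. Qed.

Lemma memSL b m s : (s \in SL b m) =
  [&& size s == b, sorted geq s & all (fun x => x <= m)%N s].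
Proof.
elim: b m s => [|b IH] m s.
  by rewrite SL0 inE; case: s.
rewrite SLS; apply/flattenP/idP.
  move=> [l /mapP [x xin ->] /mapP [s' s'in ->]].
  move: s'in; rewrite IH => /and3P [/eqP hs hso hall].
  rewrite mem_iota /= in xin.
  rewrite /= hs eqxx /= (path_sortedE geq_trans') hso andbT.
  have -> : all (geq x) s' = true by [].
  rewrite /= (_ : (x <= m)%N = true); last by lia.
  apply/allP => y ys; have := allP hall y ys; lia.
case: s => [|x s'] // /and3P [hs hso /andP [hx hall]].
rewrite /= (path_sortedE geq_trans') in hso; case/andP: hso => hx' hso.
rewrite /= eqSS in hs.
exists [seq x :: s | s <- SL b x].
  by apply/mapP; exists x => //; rewrite mem_iota /=; lia.
by apply/map_f; rewrite IH hs hso hx'.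
Qed.

Lemma uniqSL b m : uniq (SL b m).
Proof.
elim: b m => [|b IH] m //.
rewrite SLS; apply: allpairs_uniq_dep => //; first exact: iota_uniq.
by move=> [x1 s1] [x2 s2] _ _ /= [-> ->].
Qed.

Definition dnz (s : seq nat) := size (undup [seq x <- s | x != 0%N]).
Definition wt (s : seq nat) : PP := qv ^+ (sumn s) * (1 + tv) ^+ (dnz s).
Definition h b m := \sum_(s <- SL b m) wt s.

Lemma SL_split b m : SL b.+1 m.+1 = SL b.+1 m ++ [seq m.+1 :: s | s <- SL b m.+1].
Proof.
rewrite !SLS -addn1 iotaD map_cat flatten_cat /= add0n.
by rewrite cats0.
Qed.

Lemma wt_cons x s : (0 < x)%N ->
  wt (x :: s) = qv ^+ x * (if x \in s then wt s else (1 + tv) * wt s).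
Proof.
move=> hx; rewrite /wt /dnz /= (_ : (x != 0%N) = true); last by lia.
rewrite /= mem_filter (_ : (x != 0%N) = true) /=; last by lia.
case: (x \in s); rewrite /= exprD ?exprS; ring.
Qed.

Lemma h_notin b m :
  \sum_(s <- SL b m.+1 | m.+1 \notin s) wt s = h b m.
Proof.
case: b => [|b]; first by rewrite /h !SL0 !big_cons !big_nil.
rewrite SL_split big_cat /= big_map.
rewrite [X in _ + X](eq_bigl (fun _ => false)); last by move=> s; rewrite in_cons eqxx.
rewrite big_pred0_eq addr0 /h big_seq_cond [RHS]big_seq_cond.
apply: eq_bigl => s; case: (boolP (s \in SL b.+1 m)) => hs; rewrite ?andFb //.
rewrite !andTb; apply/negP => hin.
move: hs; rewrite memSL => /and3P [_ _ /allP /(_ _ hin)]; lia.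
Qed.

Lemma hL b m : h b.+1 m.+1 = h b.+1 m + qv ^+ m.+1 * (h b m.+1 + tv * h b m).
Proof.
rewrite {1}/h SL_split big_cat /= big_map; congr (_ + _).
rewrite -(h_notin b m) /h.
under eq_bigr => s _ do rewrite wt_cons //.
rewrite -mulr_sumr; congr (_ * _).
rewrite mulr_sumr (bigID (fun s => m.+1 \in s)) /=.
rewrite [X in _ = X + _](bigID (fun s => m.+1 \in s)) /= -addrA.
congr (_ + _).
- by apply: eq_bigr => s ->.
- by rewrite -big_split /=; apply: eq_bigr => s /negbTE ->; ring.
Qed.

Lemma SL_m0 b : SL b 0 = [:: nseq b 0%N].
Proof. by elim: b => [|b IH] //; rewrite SLS /= IH. Qed.

Lemma h0m m : h 0 m = 1.
Proof. by rewrite /h SL0 big_cons big_nil /wt /dnz /= expr0 mulr1 addr0. Qed.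

Lemma hb0 b : h b 0 = 1.
Proof.
rewrite /h SL_m0 big_cons big_nil addr0 /wt /dnz.
have -> : sumn (nseq b 0%N) = 0%N by elim: b.
have -> : [seq x <- nseq b 0%N | x != 0%N] = [::] by elim: b.
by rewrite /= !expr0 mulr1.
Qed.

Lemma hW b m : h b m = W b m.
Proof.
elim: b m => [|b IHb] m; first by rewrite h0m W0b.
elim: m => [|m IHm]; first by rewrite hb0 Wm0.
rewrite hL WL IHm !IHb; ring.
Qed.

Lemma card_D m (t : seq 'I_m.+1) :
  #|[set i : 'I_m.+1 | (i != ord0) && (i \in t)]| = dnz (map val t).
Proof.
have -> : [set i : 'I_m.+1 | (i != ord0) && (i \in t)] =
          [set i in [seq i <- t | i != ord0]].
  by apply/setP => i; rewrite !inE mem_filter.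
rewrite cardsE -(eq_card (mem_undup _)).
rewrite (card_uniqP (undup_uniq _)) /dnz filter_map undup_map_inj ?size_map //.
exact: val_inj.
Qed.

Lemma ov_h b m :
  \sum_(x : (b.-tuple 'I_m.+1) * {set 'I_m.+1} | is_overpart x)
     (('X^(ovp_weight x))%:P * 'X^(ovp_nover x)) = h b m.
Proof.
transitivity (\sum_(t : b.-tuple 'I_m.+1 | sorted geq (map val t))
   \sum_(o : {set 'I_m.+1} | o \subset [set i : 'I_m.+1 | (i != ord0) && (i \in (t : seq _))])
      ((('X^(sumn (map val t)))%:P * 'X^#|o|) : PP)).
  by rewrite pair_big_dep; apply: eq_big => [[t o]|[t o] _].
under eq_bigr => t _ do rewrite -mulr_sumr sum_subset_pow card_D polyC_exp.
transitivity (\sum_(t in [pred t : b.-tuple 'I_m.+1 | sorted geq (map val t)])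
   wt (map val t)).
  by apply: eq_bigr.
rewrite -big_image /h; apply: perm_big.
apply: uniq_perm; last 1 first.
- move=> s; rewrite memSL; apply/imageP/idP.
  + move=> [t ht ->]; move: ht; rewrite inE => ht.
    rewrite size_map size_tuple eqxx ht /= all_map.
    by apply/allP => i _ /=; rewrite -ltnS ltn_ord.
  + case/and3P => /eqP hs hso hall.
    have hsz : size (map (@inord m) s) == b by rewrite size_map hs.
    have e : map val (map (@inord m) s) = s.
      rewrite -map_comp -[RHS]map_id; apply/eq_in_map => x xs /=.
      by rewrite inordK // ltnS; exact: (allP hall).
    exists (Tuple hsz); last by rewrite /= e.
    by rewrite inE /= e.
- rewrite /image_mem map_inj_uniq ?enum_uniq //.
  by move=> t1 t2 /(inj_map val_inj) /val_inj.
- exact: uniqSL.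
Qed.

Lemma ovgauss_W n k : ovgauss n k = W k (n - k).
Proof. by rewrite /ovgauss ov_h hW. Qed.
End Aux.
Import Aux.

(* Coefficient of t^i q^j is ((P`_i)`_j). *)
Theorem theorem1p5 (n k l : nat) :
  (0 < k)%N -> (k <= l)%N -> (l < n)%N ->
  forall i j : nat,
    0 <= ((ovgauss n k * ovgauss n l - ovgauss n k.-1 * ovgauss n l.+1)`_i)`_j.
Proof.
move=> hk hkl hln i j.
have H := @key _ k.+1 (n-k).+1 l.+1 (n-l).+1 0 (leqnn _)
  ltac:(lia) ltac:(lia) ltac:(lia).
rewrite /X expr0 mul1r /= in H.
have e1 : ovgauss n k = V k.+1 (n-k).+1 by rewrite ovgauss_W VS.
have e2 : ovgauss n l = V l.+1 (n-l).+1 by rewrite ovgauss_W VS.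
have e3 : ovgauss n k.-1 = V k (n-k).+2.
  rewrite ovgauss_W; case: k hk hkl e1 H => [//|k'] _ hkl' _ _.
  by rewrite VS /= (_ : ((n - k'.+1).+1 = n - k')%N) //; lia.
have e4 : ovgauss n l.+1 = V l.+2 (n-l).
  by rewrite ovgauss_W (_ : (n - l = (n - l.+1).+1)%N) ?VS //; lia.
rewrite e1 e2 e3 e4; exact: H.
Qed.
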